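(* Let $A \in \mathbb{Z}^{(n-2)\times n}$ be an integer matrix of rank $n-2$ with $\ker_{\mathbb{Z}} A \cap \mathbb{N}^n = \{0\}$, let $B$ be a Gale transform of $A$ whose rows $b_1,\dots,b_n$ are all nonzero, and let $\tilde B = \{\tilde b_1,\dots,\tilde b_n\} \subseteq \mathbb{Z}^2$ be the reduced Gale transform of $A$. If the toric ideal $I_A$ is strongly robust, then $\mathrm{conv}(\tilde B)$ is a two-dimensional polygon that is centrally symmetric about the origin, i.e. $\mathrm{conv}(\tilde B) = -\mathrm{conv}(\tilde B)$; equivalently, for every vertex $v$ of $\mathrm{conv}(\tilde B)$, $-v$ is also a vertex.
   Context: For $A \in \mathbb{Z}^{d\times n}$ of rank $d$, the toric ideal is $I_A = \langle p^u - p^v : u,v\in\mathbb{N}^n,\ Au = Av\rangle \subseteq \mathbb{K}[p_1,\dots,p_n]$, where $p^u=\prod_i p_i^{u_i}$. For $u \in \mathbb{N}^n$, its fiber is $\mathcal{F}(u)=\{v\in\mathbb{N}^n : Av = Au\}$. A binomial $p^u - p^v$ is indispensable if $\mathcal{F}(u)=\{u,v\}$ and $\mathrm{supp}(u)\cap\mathrm{supp}(v)=\emptyset$ (where $\mathrm{supp}(u)=\{i : u_i\neq 0\}$); the set of indispensable binomials is $\mathcal{S}(A)$. A binomial $p^u-p^v\in I_A$ is primitive if there is no other binomial $p^{u'}-p^{v'}\in I_A$ with $p^{u'}\mid p^u$ and $p^{v'}\mid p^v$; the Graver basis $\mathcal{G}r(A)$ is the set of primitive binomials of $I_A$. $I_A$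 is strongly robust if $\mathcal{S}(A)=\mathcal{G}r(A)$. A Gale transform of $A$ (rank $n-2$) is an $n\times 2$ integer matrix $B$ whose columns form a basis of the lattice $\ker_{\mathbb{Z}}A$; write its rows as $b_i=(b_{i1},b_{i2})$. The reduced Gale transform is $\tilde B=\{\tilde b_1,\dots,\tilde b_n\}$ with $\tilde b_i = \gcd(b_{i1},b_{i2})^{-1}(-b_{i2},b_{i1})$, i.e. each row rotated by $90^\circ$ and divided by the gcd of its entries. *)

(* Defs.v *)
From HB Require Import structures.
From mathcomp Require Import all_boot all_order all_algebra.
Set Implicit Arguments. Unset Strict Implicit. Unset Printing Implicit Defensive.
Import Order.TTheory GRing.Theory Num.Theory.
Local Open Scope ring_scope.

Definition natvec n (u : 'cV[int]_n) : Prop := forall i, 0 <= u i 0.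

Definition supp n (u : 'cV[int]_n) (i : 'I_n) : bool := u i 0 != 0.

Definition fiber d n (A : 'M[int]_(d, n)) (u v : 'cV[int]_n) : Prop :=
  natvec v /\ A *m v = A *m u.

(* The (nonzero) binomial p^u - p^v, encoded by the pair (u,v), lies in I_A. *)
Definition binom_in_IA d n (A : 'M[int]_(d, n)) (u v : 'cV[int]_n) : Prop :=
  [/\ natvec u, natvec v, u <> v & A *m u = A *m v].

Definition indispensable d n (A : 'M[int]_(d, n)) (u v : 'cV[int]_n) : Prop :=
  [/\ natvec u, natvec v, u <> v,
      (forall w, fiber A u w <-> (w = u \/ w = v))
    & (forall i, ~~ (supp u i && supp v i))].

Definition primitive d n (A : 'M[int]_(d, n)) (u v : 'cV[int]_n) : Prop :=
  binom_in_IA A u v /\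
  ~ (exists u' v' : 'cV[int]_n,
       [/\ binom_in_IA A u' v', (u', v') <> (u, v),
           (forall i, u' i 0 <= u i 0) & (forall i, v' i 0 <= v i 0)]).

Definition strongly_robust d n (A : 'M[int]_(d, n)) : Prop :=
  forall u v : 'cV[int]_n, indispensable A u v <-> primitive A u v.

Definition is_gale d n (A : 'M[int]_(d, n)) (B : 'M[int]_(n, 2)) : Prop :=
  A *m B = 0 /\
  forall x : 'cV[int]_n, A *m x = 0 -> exists! c : 'cV[int]_2, x = B *m c.

Definition c0 : 'I_2 := ord0.
Definition c1 : 'I_2 := ord_max.

Definition redgale n (B : 'M[int]_(n, 2)) (i : 'I_n) : 'rV[int]_2 :=
  let g := gcdz (B i c0) (B i c1) in
  \row_j (if j == c0 then - ((B i c1) %/ g)%Z else ((B i c0) %/ g)%Z).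

Definition rV_intR (R : realFieldType) (v : 'rV[int]_2) : 'rV[R]_2 :=
  map_mx (fun z : int => z%:~R) v.

Definition in_conv (R : realFieldType) n (P : 'I_n -> 'rV[R]_2) (x : 'rV[R]_2) : Prop :=
  exists l : 'I_n -> R,
    [/\ forall i, 0 <= l i, \sum_i l i = 1 & x = \sum_i l i *: P i].

(* conv(P) is two-dimensional: its affine hull (= that of P) is the plane. *)
Definition conv_dim2 (R : realFieldType) n (P : 'I_n -> 'rV[R]_2) : Prop :=
  exists i j k : 'I_n, \det (col_mx (P j - P i) (P k - P i)) != 0.

Definition rank_Q d n (A : 'M[int]_(d, n)) : nat :=
  \rank (map_mx (fun z : int => z%:~R : rat) A).

(* Main.v *)
Require Import Defs.
From HB Require Import structures.
From mathcomp Require Import all_boot all_order all_algebra.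
From mathcomp Require Import zify ring lra.
Import Order.TTheory GRing.Theory Num.Theory.
Local Open Scope ring_scope.
Set Implicit Arguments. Unset Strict Implicit. Unset Printing Implicit Defensive.
Definition cv (a b : int) : 'cV[int]_2 := \col_i (if i == c0 then a else b).

Lemma ord2P (i : 'I_2) : i = c0 \/ i = c1.
Proof. case: i => [[|[|m]]] Hm; [left|right|] => //; exact: ord_inj. Qed.

Lemma cvE (c : 'cV[int]_2) : c = cv (c c0 0) (c c1 0).
Proof.
apply/matrixP => i j; rewrite !mxE (ord1 j).
by case: (ord2P i) => ->.
Qed.

Lemma cv_inj a b a' b' : cv a b = cv a' b' -> a = a' /\ b = b'.
Proof.
move/matrixP => H; have := H c0 0; have := H c1 0; rewrite !mxE /=.
by move=> -> ->.
Qed.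

Lemma Bmul_cv n (B : 'M[int]_(n,2)) a b j :
  (B *m cv a b) j 0 = B j c0 * a + B j c1 * b.
Proof.
rewrite !mxE big_ord_recl big_ord1 !mxE /=.
by have -> : lift ord0 ord0 = c1 :> 'I_2 by apply: ord_inj.
Qed.

Definition dt (a0 a1 b0 b1 : int) := a0 * b1 - a1 * b0.

Definition gg n (B : 'M[int]_(n,2)) i : int := gcdz (B i c0) (B i c1).
Definition r0 n (B : 'M[int]_(n,2)) i : int := redgale B i 0 c0.
Definition r1 n (B : 'M[int]_(n,2)) i : int := redgale B i 0 c1.

Lemma r0E n (B : 'M[int]_(n,2)) i : r0 B i = - ((B i c1) %/ gg B i)%Z.
Proof. by rewrite /r0 /redgale mxE eqxx. Qed.
Lemma r1E n (B : 'M[int]_(n,2)) i : r1 B i = ((B i c0) %/ gg B i)%Z.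
Proof. by rewrite /r1 /redgale mxE. Qed.

Lemma gg_gt0 n (B : 'M[int]_(n,2)) i : row i B != 0 -> 0 < gg B i.
Proof.
move=> Hr; rewrite /gg lt_def gcdz_eq0 (_ : 0 <= gcdz _ _) ?andbT //; apply: contra Hr => /andP[/eqP h0 /eqP h1].
apply/eqP/rowP => j; rewrite !mxE; case: (ord2P j) => ->; by [rewrite h0|rewrite h1].
Qed.

Lemma B0E n (B : 'M[int]_(n,2)) i : B i c0 = r1 B i * gg B i.
Proof. by rewrite r1E divzK // dvdz_gcdl. Qed.
Lemma B1E n (B : 'M[int]_(n,2)) i : B i c1 = - r0 B i * gg B i.
Proof. by rewrite r0E opprK divzK // dvdz_gcdr. Qed.

Lemma xE n (B : 'M[int]_(n,2)) a b j :
  (B *m cv a b) j 0 = gg B j * dt a b (r0 B j) (r1 B j).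
Proof. rewrite Bmul_cv B0E B1E /dt; ring. Qed.

Lemma gale_inj d n (A : 'M[int]_(d,n)) B : is_gale A B ->
  forall c c' : 'cV[int]_2, B *m c = B *m c' -> c = c'.
Proof.
move=> [AB0 H] c c' E.
have HA : A *m (B *m c) = 0 by rewrite mulmxA AB0 mul0mx.
have [c'' [_ U]] := H _ HA.
by rewrite -(U c) // -(U c') // E.
Qed.

Lemma robust_circ d n (A : 'M[int]_(d,n)) B k (w : 'cV[int]_2) :
  is_gale A B -> strongly_robust A -> w != 0 -> (B *m w) k 0 = 0 ->
  (forall c : 'cV[int]_2, (B *m c) k 0 = 0 -> exists t : int, c = t *: w) ->
  forall c : 'cV[int]_2, (forall j, (B *m c) j 0 <= Num.max ((B *m w) j 0) 0) -> c = 0 \/ c = w.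
Proof.
move=> HG SR wn0 xk0 Hker c Hc.
have inj := gale_inj HG.
case: HG => AB0 Hg.
move Ex: (B *m w) => x in xk0 Hc *.
have xn0 : x != 0.
  apply: contra wn0 => /eqP x0; apply/eqP; apply: inj; by rewrite Ex x0 mulmx0.
pose u := \col_j Num.max (x j 0) 0.
pose v := \col_j Num.max (- x j 0) 0.
have uv : u - v = x by apply/matrixP => i j; rewrite (ord1 j) !mxE; move: (x i 0) => a; lia.
have Ax : A *m x = 0 by rewrite -Ex mulmxA AB0 mul0mx.
have natu : natvec u by move=> i; rewrite mxE; move: (x i 0) => a; lia.
have natv : natvec v by move=> i; rewrite mxE; move: (x i 0) => a; lia.
have Auv : A *m u = A *m v by apply/eqP; rewrite -subr_eq0 -mulmxBr uv Ax.
have unv : u <> v by move=> e; move: xn0; rewrite -uv e subrr eqxx.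
have prim : primitive A u v.
  split; first by [].
  move=> [u' [v' [[nu' nv' ne' Au'] neq le1 le2]]].
  pose y := u' - v'.
  have Ay : A *m y = 0 by rewrite mulmxBr Au' subrr.
  have [c' [Hc' _]] := Hg y Ay.
  have yk : (B *m c') k 0 = 0.
    rewrite -Hc' !mxE.
    have := le1 k; have := le2 k; have := nu' k; have := nv' k; rewrite !mxE.
    move: (xk0); move: (u' k 0) (v' k 0) (x k 0) => a b e; lia.
  have [t ct] := Hker c' yk.
  have yt : y = t *: x by rewrite Hc' ct -Ex scalemxAr.
  have [j xj] : exists j, x j 0 != 0.
    case: (pickP (fun j => x j 0 != 0)) => [j Hj|H0]; first by exists j.
    exfalso; move/eqP: xn0; apply; apply/matrixP => i j'.
    by rewrite (ord1 j') mxE; move/negbFE/eqP: (H0 i).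
  have ht : t = 0 \/ t = 1.
    move/matrixP: yt => /(_ j 0); rewrite !mxE => yj.
    have := le1 j; have := le2 j; have := nu' j; have := nv' j; rewrite !mxE.
    move: xj yj; move: (u' j 0) (v' j 0) (x j 0) => a b e; nia.
  case: ht => ht.
    apply: ne'; apply/eqP; rewrite -subr_eq0; apply/eqP.
    by rewrite -/y yt ht scale0r.
  apply: neq; congr pair; apply/matrixP => i j'; rewrite (ord1 j');
  move/matrixP: yt => /(_ i 0); rewrite !mxE ht mul1r => yi;
  have := le1 i; have := le2 i; have := nu' i; have := nv' i; rewrite !mxE;
  move: yi; move: (u' i 0) (v' i 0) (x i 0) => a b e; lia.
have [_ _ _ Hf _] := (SR u v).2 prim.
move Ez: (B *m c) => z in Hc.
pose W := u - z.
have fW : fiber A u W.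
  split.
    by move=> i; rewrite !mxE; have := Hc i; move: (x i 0) (z i 0) => a b; lia.
  by rewrite mulmxBr -Ez mulmxA AB0 mul0mx subr0.
have zE : z = u - W by rewrite /W opprB addrC subrK.
case: ((Hf W).1 fW) => e.
  by left; apply: inj; rewrite mulmx0 Ez zE e subrr.
by right; apply: inj; rewrite Ex Ez zE e uv.
Qed.

Lemma sum_abs_ge n (f : 'I_n -> int) j : `|f j| <= \sum_i `|f i|.
Proof.
rewrite (bigD1 j) //= lerDl; apply: sumr_ge0 => i _; exact: normr_ge0.
Qed.

Lemma core n (al de : 'I_n -> int) :
  (forall s : int, exists j, Num.max (de j) 0 < s * de j - al j) ->
  (exists j, de j = 0 /\ al j < 0) \/
  (exists a b (s : int),
     [/\ 0 < de a, de b < 0, al a + 1 <= s * de a & al b + 1 <= s * de b]).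
Proof.
move=> H.
case: (pickP (fun j => (de j == 0) && (al j < 0))) => [j /andP[/eqP h1 h2] | H0].
  by left; exists j.
right.
pose Rp (s : int) := [exists a, (0 < de a) && (de a < s * de a - al a)].
pose Lp (s : int) := [exists b, (de b < 0) && (al b < s * de b)].
have LR : forall s, Lp s || Rp s.
  move=> s; have [j Hj] := H s; have := H0 j.
  case: (ltgtP (de j) 0) => hd /negbT hn.
  - apply/orP; left; apply/existsP; exists j; apply/andP; split => //.
    move: Hj hd; move: (de j) (al j) => x y; lia.
  - apply/orP; right; apply/existsP; exists j; apply/andP; split => //.
    move: Hj hd; move: (de j) (al j) => x y; lia.
  - exfalso; move: Hj hd hn; move: (de j) (al j) => x y; lia.
pose K : int := 1 + \sum_j `|al j|.
have alK : forall j, `|al j| < K.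
  move=> j; have := sum_abs_ge al j; rewrite /K; move: (\sum_i _) (`|al j|) => x y; lia.
have K1 : 1 <= K.
  rewrite /K lerDl; apply: sumr_ge0 => i _; exact: normr_ge0.
clearbody K.
have nR : ~~ Rp (- K).
  apply/existsP => -[a /andP[h1 h2]]; have := alK a.
  move: h1 h2 K1; move: (de a) (al a) => x y; nia.
have nL : ~~ Lp K.
  apply/existsP => -[a /andP[h1 h2]]; have := alK a.
  move: h1 h2 K1; move: (de a) (al a) => x y; nia.
have RK : Rp K by have := LR K; rewrite (negbTE nL).
have ex : exists m : nat, Rp (m%:Z - K).
  exists (absz (K + K)); rewrite (_ : (absz (K + K))%:Z - K = K) //; lia.
case: (ex_minnP ex) => m Hm Hmin.
case: m Hm Hmin => [|m] Hm Hmin.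
  by move: nR Hm; rewrite (_ : 0%:Z - K = - K) ?sub0r // => /negbTE ->.
have nRm : ~~ Rp (m%:Z - K).
  by apply/negP => /Hmin; rewrite ltnn.
have Lm : Lp (m%:Z - K) by have := LR (m%:Z - K); rewrite (negbTE nRm) orbF.
move/existsP: Lm => [b /andP[hb1 hb2]].
move/existsP: Hm => [a /andP[ha1 ha2]].
exists a, b, (m%:Z - K); split => //.
  move: ha2; rewrite -addn1 PoszD; move: (de a) (al a) (m%:Z) => x y z; nia.
move: hb2; move: (de b) (al b) (m%:Z) => x y z; nia.
Qed.

Lemma sum_if (R : realFieldType) n (a : 'I_n) (c : R) (F : 'I_n -> 'rV[R]_2) :
  \sum_i (if i == a then c else 0) *: F i = c *: F a.
Proof.
rewrite (bigD1 a) //= eqxx big1 ?addr0 // => i /negbTE ->; by rewrite scale0r.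
Qed.

Lemma sum_if1 (R : realFieldType) n (a : 'I_n) (c : R) :
  \sum_i (if i == a then c else 0) = c.
Proof.
by rewrite (bigD1 a) //= eqxx big1 ?addr0 // => i /negbTE ->.
Qed.

Lemma in_conv3 (R : realFieldType) n (P : 'I_n -> 'rV[R]_2) a b k (ca cb ck : R) x :
  0 <= ca -> 0 <= cb -> 0 <= ck -> ca + cb + ck = 1 ->
  x = ca *: P a + cb *: P b + ck *: P k -> in_conv P x.
Proof.
move=> ha hb hk hs ->.
exists (fun i => (if i == a then ca else 0) + (if i == b then cb else 0)
                 + (if i == k then ck else 0)); split.
- by move=> i; rewrite !addr_ge0 //; case: ifP.
- by rewrite !big_split /= !sum_if1.
- under eq_bigr => i _ do rewrite !scalerDl.
  by rewrite !big_split /= !sum_if.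
Qed.

Lemma in_conv_int (R : realFieldType) n (V : 'I_n -> 'rV[int]_2) a b k
   (Dn Na Nb Nk : int) (X : 'rV[int]_2) :
  0 < Dn -> 0 <= Na -> 0 <= Nb -> 0 <= Nk -> Na + Nb + Nk = Dn ->
  (forall j, Dn * X 0 j = Na * V a 0 j + Nb * V b 0 j + Nk * V k 0 j) ->
  in_conv (fun i => rV_intR R (V i)) (rV_intR R X).
Proof.
move=> hD ha hb hk hs HX.
have dn0 : (Dn%:~R : R) != 0 by rewrite intr_eq0 gt_eqF.
apply: (@in_conv3 R n _ a b k (Na%:~R / Dn%:~R) (Nb%:~R / Dn%:~R) (Nk%:~R / Dn%:~R)).
- by rewrite divr_ge0 // ?ler0z // ltW // ltr0z.
- by rewrite divr_ge0 // ?ler0z // ltW // ltr0z.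
- by rewrite divr_ge0 // ?ler0z // ltW // ltr0z.
- rewrite -!mulrDl -!intrD hs divff //.
- apply/rowP => j; rewrite !mxE.
  have E := congr1 (fun z : int => (z%:~R : R)) (HX j).
  rewrite /= !intrD !intrM in E.
  apply: (mulfI dn0); rewrite E; field; exact: dn0.
Qed.

Lemma conv_neg (R : realFieldType) n (P : 'I_n -> 'rV[R]_2) :
  (forall i, in_conv P (- P i)) -> forall x, in_conv P x -> in_conv P (- x).
Proof.
move=> H x [l [l0 l1 ->]].
have [mu Hmu] := fin_all_exists H.
exists (fun j => \sum_i l i * mu i j); split.
- move=> j; apply: sumr_ge0 => i _; apply: mulr_ge0 => //.
  by case: (Hmu i) => h _ _.
- rewrite exchange_big /= -l1; apply: eq_bigr => i _.
  by rewrite -mulr_sumr; case: (Hmu i) => _ -> _; rewrite mulr1.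
- rewrite -sumrN.
  under eq_bigr => i _ do rewrite -scalerN.
  under eq_bigr => i _ do (case: (Hmu i) => _ _ ->; rewrite scaler_sumr).
  rewrite exchange_big /=; apply: eq_bigr => j _.
  rewrite scaler_suml; apply: eq_bigr => i _; by rewrite scalerA.
Qed.

Lemma det_colmx (R : realFieldType) (u v : 'rV[R]_2) :
  \det (col_mx u v) = u 0 c0 * v 0 c1 - u 0 c1 * v 0 c0.
Proof.
rewrite (expand_det_row _ 0) !big_ord_recl big_ord0 /cofactor !det_mx11.
have e2 : (lift ord0 ord0 : 'I_2) = c1 by apply: ord_inj.
have s0 : @split 1 1 0 = inl 0 by apply: (canLR unsplitK); apply: ord_inj.
have s1 : @split 1 1 c1 = inr 0 by apply: (canLR unsplitK); apply: ord_inj.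
have e3 : (lift c1 0 : 'I_2) = c0 by apply: ord_inj.
rewrite !mxE /= e2 s0 s1 e3 expr0 expr1 /=.
rewrite mul1r mulN1r addr0 mulrN.
by have -> : (ord0 : 'I_2) = c0 by [].
Qed.

Definition deF n (B : 'M[int]_(n,2)) k j := dt (r0 B k) (r1 B k) (r0 B j) (r1 B j).
Definition alF n (B : 'M[int]_(n,2)) (y0 y1 : int) j := dt (r0 B j) (r1 B j) y0 y1.

Lemma cv0 a b : cv a b c0 0 = a. Proof. by rewrite mxE. Qed.
Lemma cv1 a b : cv a b c1 0 = b. Proof. by rewrite mxE. Qed.

Lemma main_k d n (A : 'M[int]_(d,n)) B k :
  is_gale A B -> strongly_robust A -> (forall i, row i B != 0) ->
  exists y0 y1 : int, dt (r0 B k) (r1 B k) y0 y1 = 1 /\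
  (exists j0, deF B k j0 != 0) /\
  ((exists j, deF B k j = 0 /\ alF B y0 y1 j < 0) \/
   (exists a b (s : int), [/\ 0 < deF B k a, deF B k b < 0,
       alF B y0 y1 a + 1 <= s * deF B k a & alF B y0 y1 b + 1 <= s * deF B k b])).
Proof.
move=> HG SR Hr.
have g0 := gg_gt0 (Hr k).
have gn0 : gg B k != 0 by rewrite gt_eqF.
case: (Bezoutz (B k c0) (B k c1)) => uu [vv Huv].
change (uu * B k c0 + vv * B k c1 = gg B k) in Huv.
rewrite B0E B1E in Huv.
set w0 := r0 B k in Huv *; set w1 := r1 B k in Huv *.
have hdet : dt w0 w1 (-uu) (-vv) = 1.
  apply: (mulIf gn0); rewrite mul1r -{2}Huv /dt; ring.
exists (-uu), (-vv); split => //.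
move: (-uu) (-vv) hdet => y0 y1 hdet.
pose w := cv w0 w1.
have wn0 : w != 0.
  apply/negP => /eqP e.
  have h0 := congr1 (fun m : 'cV[int]_2 => m c0 0) e.
  have h1 := congr1 (fun m : 'cV[int]_2 => m c1 0) e.
  rewrite /= cv0 mxE in h0; rewrite /= cv1 mxE in h1.
  by move: hdet; rewrite /dt h0 h1 !mul0r subrr.
have xk0 : (B *m w) k 0 = 0 by rewrite xE /dt -/w0 -/w1; ring.
have Hker : forall c : 'cV[int]_2, (B *m c) k 0 = 0 -> exists t : int, c = t *: w.
  move=> c; rewrite (cvE c); move: (c c0 0) (c c1 0) => a b.
  rewrite xE -/w0 -/w1 => /eqP; rewrite mulf_eq0 (negbTE gn0) /= => /eqP dab.
  have dba : dt w0 w1 a b = 0.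
    have e : dt w0 w1 a b = - dt a b w0 w1 by rewrite /dt; ring.
    by rewrite e dab oppr0.
  exists (dt a b y0 y1).
  have ida : a * dt w0 w1 y0 y1 = dt a b y0 y1 * w0 + dt w0 w1 a b * y0 by rewrite /dt; ring.
  have idb : b * dt w0 w1 y0 y1 = dt a b y0 y1 * w1 + dt w0 w1 a b * y1 by rewrite /dt; ring.
  rewrite hdet mulr1 dba mul0r addr0 in ida.
  rewrite hdet mulr1 dba mul0r addr0 in idb.
  apply/matrixP => i j; rewrite (ord1 j) !mxE; case: (ord2P i) => -> /=.
    exact: ida.
  exact: idb.
have robust := robust_circ HG SR wn0 xk0 Hker.
split.
  have xn0 : B *m w != 0.
    by apply: contra wn0 => /eqP e; apply/eqP; apply: (gale_inj HG); rewrite e mulmx0.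
  case: (pickP (fun j => (B *m w) j 0 != 0)) => [j Hj|H0].
    exists j; move: Hj; rewrite xE mulf_eq0 negb_or => /andP[_ h].
    exact: h.
  exfalso; move/eqP: xn0; apply; apply/matrixP => i j'.
  by rewrite (ord1 j') [in RHS]mxE; move/negbFE/eqP: (H0 i).
apply: core => s.
case: (pickP (fun j => Num.max (deF B k j) 0 < s * deF B k j - alF B y0 y1 j)) => [j Hj|H0].
  by exists j.
exfalso.
have key := robust (cv (y0 + s * w0) (y1 + s * w1)).
have : forall j, (B *m cv (y0 + s * w0) (y1 + s * w1)) j 0 <= Num.max ((B *m w) j 0) 0.
  move=> j; rewrite !xE.
  have eq1 : dt (y0 + s * w0) (y1 + s * w1) (r0 B j) (r1 B j) = s * deF B k j - alF B y0 y1 j.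
    by rewrite /deF /alF /dt -/w0 -/w1; ring.
  have eq2 : dt w0 w1 (r0 B j) (r1 B j) = deF B k j by [].
  rewrite eq1 eq2; have := H0 j; have := gg_gt0 (Hr j).
  move: (gg B j) (deF B k j) (alF B y0 y1 j) => g D a; rewrite /= => hg /negbT.
  rewrite -leNgt; nia.
move/key => [e|e].
  have h0 := congr1 (fun m : 'cV[int]_2 => m c0 0) e.
  have h1 := congr1 (fun m : 'cV[int]_2 => m c1 0) e.
  rewrite /= cv0 mxE in h0; rewrite /= cv1 mxE in h1.
  have : dt w0 w1 (y0 + s * w0) (y1 + s * w1) = dt w0 w1 y0 y1 by rewrite /dt; ring.
  by rewrite hdet h0 h1 /dt !mulr0 subrr.
have /cv_inj [h0 h1] := e.
have : dt w0 w1 (y0 + s * w0) (y1 + s * w1) = dt w0 w1 y0 y1 by rewrite /dt; ring.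
by rewrite hdet h0 h1 /dt mulrC subrr.
Qed.

Lemma decomp (w0 w1 y0 y1 z0 z1 : int) : dt w0 w1 y0 y1 = 1 ->
  z0 = dt z0 z1 y0 y1 * w0 + dt w0 w1 z0 z1 * y0 /\
  z1 = dt z0 z1 y0 y1 * w1 + dt w0 w1 z0 z1 * y1.
Proof.
move=> h.
have e0 : z0 * dt w0 w1 y0 y1 = dt z0 z1 y0 y1 * w0 + dt w0 w1 z0 z1 * y0 by rewrite /dt; ring.
have e1 : z1 * dt w0 w1 y0 y1 = dt z0 z1 y0 y1 * w1 + dt w0 w1 z0 z1 * y1 by rewrite /dt; ring.
by rewrite h !mulr1 in e0 e1.
Qed.

Lemma cert1 (w0 y0 Aa Ab Da Db ra rb : int) :
  ra = Aa * w0 + Da * y0 -> rb = Ab * w0 + Db * y0 ->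
  ((Da - Db) - (- Db * Aa + Da * Ab)) * (- w0) =
  (-2 * Db) * ra + (2 * Da) * rb + (- (- Db * Aa + Da * Ab) - (Da - Db)) * w0.
Proof. by move=> -> ->; ring. Qed.

Lemma cert2 (w0 y0 A D r : int) : r = A * w0 + D * y0 -> D = 0 ->
  (1 - A) * (- w0) = 2 * r + 0 * r + (-1 - A) * w0.
Proof. by move=> -> ->; ring. Qed.

Lemma negP_k (R : realFieldType) d n (A : 'M[int]_(d,n)) B k :
  is_gale A B -> strongly_robust A -> (forall i, row i B != 0) ->
  in_conv (fun i => rV_intR R (redgale B i)) (- rV_intR R (redgale B k)).
Proof.
move=> HG SR Hr.
have -> : - rV_intR R (redgale B k) = rV_intR R (- redgale B k).
  by apply/rowP => j; rewrite !mxE intrN.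
have [y0 [y1 [hdet [_ [[j [hde hal]] | [a [b [s [ha hb hsa hsb]]]]]]]]] := main_k k HG SR Hr.
- apply: (@in_conv_int R n _ j j k (1 - alF B y0 y1 j) 2 0 (-1 - alF B y0 y1 j)).
  + move: hal; move: (alF B y0 y1 j) => x; lia.
  + by [].
  + by [].
  + move: hal; move: (alF B y0 y1 j) => x; lia.
  + ring.
  + have [d0 d1] := decomp (r0 B j) (r1 B j) hdet.
    move=> c; rewrite mxE; case: (ord2P c) => ->.
    * exact: (cert2 d0 hde).
    * exact: (cert2 d1 hde).
- pose Dn := (deF B k a - deF B k b) - (- deF B k b * alF B y0 y1 a + deF B k a * alF B y0 y1 b).
  apply: (@in_conv_int R n _ a b k Dn (-2 * deF B k b) (2 * deF B k a)
     (- (- deF B k b * alF B y0 y1 a + deF B k a * alF B y0 y1 b) - (deF B k a - deF B k b))).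
  + rewrite /Dn; move: ha hb hsa hsb.
    move: (deF B k a) (deF B k b) (alF B y0 y1 a) (alF B y0 y1 b) s => x y z t u; nia.
  + move: hb; move: (deF B k b) => x; lia.
  + move: ha; move: (deF B k a) => x; lia.
  + move: ha hb hsa hsb.
    move: (deF B k a) (deF B k b) (alF B y0 y1 a) (alF B y0 y1 b) s => x y z t u; nia.
  + rewrite /Dn; ring.
  + have [da0 da1] := decomp (r0 B a) (r1 B a) hdet.
    have [db0 db1] := decomp (r0 B b) (r1 B b) hdet.
    move=> c; rewrite mxE; case: (ord2P c) => ->.
    * exact: (cert1 da0 db0).
    * exact: (cert1 da1 db1).
Qed.

Lemma detcase2 (w0 w1 y0 y1 A0 D0 A z00 z01 z0 z1 : int) : dt w0 w1 y0 y1 = 1 ->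
  z00 = A0 * w0 + D0 * y0 -> z01 = A0 * w1 + D0 * y1 ->
  z0 = A * w0 + 0 * y0 -> z1 = A * w1 + 0 * y1 ->
  (z00 - w0) * (z1 - w1) - (z01 - w1) * (z0 - w0) = (1 - A) * D0.
Proof.
move=> h -> -> -> ->.
transitivity ((1 - A) * D0 * dt w0 w1 y0 y1); first by rewrite /dt; ring.
by rewrite h mulr1.
Qed.

Lemma detcase1 (w0 w1 y0 y1 Aa Da Ab Db za0 za1 zb0 zb1 : int) : dt w0 w1 y0 y1 = 1 ->
  za0 = Aa * w0 + Da * y0 -> za1 = Aa * w1 + Da * y1 ->
  zb0 = Ab * w0 + Db * y0 -> zb1 = Ab * w1 + Db * y1 ->
  (za0 - w0) * (zb1 - w1) - (za1 - w1) * (zb0 - w0) =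
  (Da - Db) - (- Db * Aa + Da * Ab).
Proof.
move=> h -> -> -> ->.
transitivity (((Da - Db) - (- Db * Aa + Da * Ab)) * dt w0 w1 y0 y1); first by rewrite /dt; ring.
by rewrite h mulr1.
Qed.

Lemma subE (R : realFieldType) (M N : 'rV[R]_2) j : (M - N) 0 j = M 0 j - N 0 j.
Proof. by rewrite !mxE. Qed.
Lemma PE0 (R : realFieldType) n (B : 'M[int]_(n,2)) i :
  (rV_intR R (redgale B i)) 0 c0 = (r0 B i)%:~R.
Proof. by rewrite /rV_intR mxE. Qed.
Lemma PE1 (R : realFieldType) n (B : 'M[int]_(n,2)) i :
  (rV_intR R (redgale B i)) 0 c1 = (r1 B i)%:~R.
Proof. by rewrite /rV_intR mxE. Qed.

Lemma dim2 (R : realFieldType) d n (A : 'M[int]_(d,n)) B (k : 'I_n) :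
  is_gale A B -> strongly_robust A -> (forall i, row i B != 0) ->
  conv_dim2 (fun i => rV_intR R (redgale B i)).
Proof.
move=> HG SR Hr.
have [y0 [y1 [hdet [[j0 hj0] [[j [hde hal]] | [a [b [s [ha hb hsa hsb]]]]]]]]] := main_k k HG SR Hr.
- exists k, j0, j; rewrite det_colmx !subE !PE0 !PE1 -!intrB -!intrM -intrB intr_eq0.
  have [d0 d1] := decomp (r0 B j0) (r1 B j0) hdet.
  have [e0 e1] := decomp (r0 B j) (r1 B j) hdet.
  rewrite -/(deF B k j) hde in e0 e1.
  have E := detcase2 hdet d0 d1 e0 e1.
  rewrite E mulf_eq0 negb_or hj0 andbT.
  move: hal; rewrite /alF; move: (dt (r0 B j) (r1 B j) y0 y1) => x; lia.
- exists k, a, b; rewrite det_colmx !subE !PE0 !PE1 -!intrB -!intrM -intrB intr_eq0.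
  have [da0 da1] := decomp (r0 B a) (r1 B a) hdet.
  have [db0 db1] := decomp (r0 B b) (r1 B b) hdet.
  have E := detcase1 hdet da0 da1 db0 db1.
  rewrite E -/(deF B k a) -/(deF B k b) -/(alF B y0 y1 a) -/(alF B y0 y1 b).
  move: ha hb hsa hsb.
  move: (deF B k a) (deF B k b) (alF B y0 y1 a) (alF B y0 y1 b) s => x y z t u; nia.
Qed.

Theorem theorem1p1 (R : realFieldType) (n : nat) (A : 'M[int]_(n - 2, n))
    (B : 'M[int]_(n, 2)) :
  (2 <= n)%N ->
  rank_Q A = (n - 2)%N ->
  (forall u : 'cV[int]_n, A *m u = 0 -> natvec u -> u = 0) ->
  is_gale A B ->
  (forall i : 'I_n, row i B != 0) ->
  strongly_robust A ->
  let P := fun i : 'I_n => rV_intR R (redgale B i) in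
  conv_dim2 P /\ (forall x : 'rV[R]_2, in_conv P x <-> in_conv P (- x)).
Proof.
move=> n2 _ _ HG Hr SR P; split.
  exact: (dim2 R (Ordinal (ltnW n2)) HG SR Hr).
have H : forall i, in_conv P (- P i) by move=> i; exact: (negP_k R i HG SR Hr).
move=> x; split; first exact: conv_neg H x.
by move=> h; rewrite -(opprK x); exact: conv_neg H _ h.
Qed.
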